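(* Let $\mathbf{u}$ be an $m$-dimensional unit vector with entries in $\mathcal{R}_{12}$. Then for any $0\le j\le m-1$ there exists a sequence $G_1,\ldots,G_q$ of one-level operators of type $\zeta_{12}$ and two-level operators of type $X$ and $H'$ such that $G_1\cdots G_q\mathbf{u}=\mathbf{e}_j$.
   Context: $\zeta_{12}=e^{2\pi i/12}$ and $\mathcal{R}_{12}$ is the smallest subring of $\mathbb{C}$ containing $1/2$ and $\zeta_{12}$. $\mathbf{e}_j$ is the $j$-th standard basis vector. $X=\begin{bmatrix}0&1\\1&0\end{bmatrix}$, $H'=\frac{1+i}{2}\begin{bmatrix}1&1\\1&-1\end{bmatrix}$. The one-level operator $c_{[j]}$ of type $c$ is the $m\times m$ identity with $(j,j)$ entry replaced by $c$; the two-level operator $M_{[j,j']}$ ($j<j'$) of type $M\in\mathrm{M}_2(\mathbb{C})$ is the $m\times m$ identity with entries at $(j,j),(j,j'),(j',j),(j',j')$ replaced by $M_{1,1},M_{1,2},M_{2,1},M_{2,2}$. *)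

(* Defs.v *)
(* complex numbers modelled by algC (algebraic complex numbers,
   a subfield of C containing all the numbers involved). *)
From HB Require Import structures.
From mathcomp Require Import all_boot all_order all_algebra all_field.
Set Implicit Arguments. Unset Strict Implicit. Unset Printing Implicit Defensive.
Import Order.TTheory GRing.Theory Num.Theory.
Local Open Scope ring_scope.

(* zeta_12 = e^{2 pi i/12} = cos(pi/6) + i sin(pi/6) = (sqrt 3 + i)/2 *)
Definition zeta12 : algC := (sqrtC 3%:R + 'i) / 2%:R.

(* R_12: smallest subring of C containing 1/2 and zeta_12 (inductive closure) *)
Inductive inR12 : algC -> Prop :=
| R12_one  : inR12 1
| R12_half : inR12 (2%:R)^-1
| R12_zeta : inR12 zeta12
| R12_add x y : inR12 x -> inR12 y -> inR12 (x + y)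
| R12_opp x : inR12 x -> inR12 (- x)
| R12_mul x y : inR12 x -> inR12 y -> inR12 (x * y).

Definition i0 : 'I_2 := ord0.
Definition i1 : 'I_2 := ord_max.

Definition Xmx : 'M[algC]_2 := \matrix_(r, s) (r != s)%:R.
Definition H'mx : 'M[algC]_2 :=
  \matrix_(r, s) ((1 + 'i) / 2%:R * (if (r == i1) && (s == i1) then -1 else 1)).

Definition onelevel (m : nat) (j : 'I_m) (c : algC) : 'M[algC]_m :=
  \matrix_(r, s) (if (r == j) && (s == j) then c else (r == s)%:R).

Definition twolevel (m : nat) (j j' : 'I_m) (M : 'M[algC]_2) : 'M[algC]_m :=
  \matrix_(r, s)
    (if (r == j) && (s == j) then M i0 i0
     else if (r == j) && (s == j') then M i0 i1
     else if (r == j') && (s == j) then M i1 i0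
     else if (r == j') && (s == j') then M i1 i1
     else (r == s)%:R).

Definition allowed_gate (m : nat) (G : 'M[algC]_m) : Prop :=
  (exists j : 'I_m, G = onelevel j zeta12) \/
  (exists (j j' : 'I_m), (j < j')%N /\ (G = twolevel j j' Xmx \/ G = twolevel j j' H'mx)).

Definition gate_prod (m : nat) (s : seq 'M[algC]_m) : 'M[algC]_m :=
  foldr (fun A B => A *m B) 1%:M s.

Definition basis_vec (m : nat) (j : 'I_m) : 'cV[algC]_m := \col_i (i == j)%:R.

(* Main.v *)
Require Import Defs.
From mathcomp Require Import all_boot all_order all_algebra all_field.
From mathcomp Require Import ring lra zify.
From Stdlib Require Import IndefiniteDescription.
Import GRing.Theory Num.Theory.
Local Open Scope ring_scope.

Definition s3 : algC := sqrtC 3%:R.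
Lemma hs : s3 ^+ 2 = 3%:R. Proof. by rewrite /s3 sqrtCK. Qed.
Lemma hi : 'i ^+ 2 = -1 :> algC. Proof. exact: sqrCi. Qed.
Lemma zetaE : zeta12 = (s3 + 'i) / 2%:R. Proof. by []. Qed.
Lemma z3 : zeta12 ^+ 3 = 'i.
Proof. rewrite zetaE. have h1 := hs. have h2 := hi. by field: h1 h2. Qed.
Lemma z4 : zeta12 ^+ 4 = zeta12 ^+ 2 - 1.
Proof. rewrite zetaE. have h1 := hs. have h2 := hi. by field: h1 h2. Qed.
Lemma s3_real : s3^* = s3.
Proof. apply: conj_Creal; apply: ger0_real; by rewrite /s3 sqrtC_ge0 ler0n. Qed.
Lemma zconj : zeta12^* = (s3 - 'i) / 2%:R.
Proof. rewrite zetaE fmorph_div rmorphD /=. rewrite s3_real conjCi rmorph_nat. by []. Qed.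

Record zz := ZZ { c0 : int; c1 : int; c2 : int; c3 : int }.
Definition ev (c : zz) : algC :=
  (c0 c)%:~R + (c1 c)%:~R * zeta12 + (c2 c)%:~R * zeta12 ^+ 2 + (c3 c)%:~R * zeta12 ^+ 3.
Definition zmz (c : zz) := ZZ (- c3 c) (c0 c) (c1 c + c3 c) (c2 c).
Definition zadd (a b : zz) := ZZ (c0 a + c0 b) (c1 a + c1 b) (c2 a + c2 b) (c3 a + c3 b).
Definition zsub (a b : zz) := ZZ (c0 a - c0 b) (c1 a - c1 b) (c2 a - c2 b) (c3 a - c3 b).
Definition zscal (n : int) (a : zz) := ZZ (n * c0 a) (n * c1 a) (n * c2 a) (n * c3 a).
Definition zhalf (a : zz) := ZZ (c0 a %/ 2)%Z (c1 a %/ 2)%Z (c2 a %/ 2)%Z (c3 a %/ 2)%Z.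
Definition zone := ZZ 1 0 0 0.
Definition zzero := ZZ 0 0 0 0.
Definition zmul (a b : zz) :=
  zadd (zadd (zscal (c0 a) b) (zscal (c1 a) (zmz b)))
       (zadd (zscal (c2 a) (iter 2 zmz b)) (zscal (c3 a) (iter 3 zmz b))).
Definition zdel (c : zz) := zadd c (iter 3 zmz c).
Definition zA (c : zz) : int :=
  c0 c * c0 c + c1 c * c1 c + c2 c * c2 c + c3 c * c3 c + c0 c * c2 c + c1 c * c3 c.
Definition zB (c : zz) : int := c0 c * c1 c + c1 c * c2 c + c2 c * c3 c.

Lemma ev_zmz c : ev (zmz c) = zeta12 * ev c.
Proof.
rewrite /ev /zmz /=. have h := z4. rewrite !rmorphD !rmorphN /=. by ring: h.
Qed.
Lemma ev_iter n c : ev (iter n zmz c) = zeta12 ^+ n * ev c.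
Proof. elim: n => [|n IH] /=; first by rewrite mul1r. by rewrite ev_zmz IH exprS mulrA. Qed.
Lemma ev_add a b : ev (zadd a b) = ev a + ev b.
Proof. rewrite /ev /= !rmorphD /=. ring. Qed.
Lemma ev_sub a b : ev (zsub a b) = ev a - ev b.
Proof. rewrite /ev /= !rmorphB /=. ring. Qed.
Lemma ev_scal n a : ev (zscal n a) = n%:~R * ev a.
Proof. rewrite /ev /= !rmorphM /=. ring. Qed.
Lemma ev_mul a b : ev (zmul a b) = ev a * ev b.
Proof. rewrite /zmul !ev_add !ev_scal !ev_iter ev_zmz /ev /=. ring. Qed.
Lemma ev_one : ev zone = 1.
Proof. rewrite /ev /=. ring. Qed.
Lemma ev_zero : ev zzero = 0.
Proof. rewrite /ev /=. ring. Qed.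
Lemma ev_del c : ev (zdel c) = (1 + 'i) * ev c.
Proof. by rewrite /zdel ev_add ev_iter z3 mulrDl mul1r. Qed.

Lemma conj_lin (a b c d : int) (z : algC) :
  (a%:~R + b%:~R * z + c%:~R * z ^+ 2 + d%:~R * z ^+ 3)^* =
  a%:~R + b%:~R * z^* + c%:~R * z^* ^+ 2 + d%:~R * z^* ^+ 3.
Proof. rewrite !rmorphD !rmorphM !rmorph_int /=. ring. Qed.

Lemma ev_norm c : `|ev c| ^+ 2 = (zA c)%:~R + s3 * (zB c)%:~R.
Proof.
rewrite normCK /ev conj_lin zconj /zA /zB !rmorphD !rmorphM zetaE.
have h1 := hs. have h2 := hi. by field: h1 h2.
Qed.

Definition pz (x : int) : bool := (x %% 2)%Z != 0.
Lemma pzD x y : pz (x + y) = pz x (+) pz y.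
Proof. rewrite /pz; case: (x %% 2 =P 0)%Z => ?; case: (y %% 2 =P 0)%Z => ?; case: ((x+y) %% 2 =P 0)%Z => ? //=; lia. Qed.
Lemma pzB x y : pz (x - y) = pz x (+) pz y.
Proof. rewrite /pz; case: (x %% 2 =P 0)%Z => ?; case: (y %% 2 =P 0)%Z => ?; case: ((x-y) %% 2 =P 0)%Z => ? //=; lia. Qed.
Lemma pzN x : pz (- x) = pz x.
Proof. rewrite /pz; case: (x %% 2 =P 0)%Z => ?; case: ((-x) %% 2 =P 0)%Z => ? //=; lia. Qed.
Lemma pzM x y : pz (x * y) = pz x && pz y.
Proof. rewrite /pz; case: (x %% 2 =P 0)%Z => ?; case: (y %% 2 =P 0)%Z => ?; case: ((x*y) %% 2 =P 0)%Z => ? //=; nia. Qed.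
Lemma pz0 : pz 0 = false. Proof. by []. Qed.
Lemma pz_half x : ~~ pz x -> x = 2 * (x %/ 2)%Z.
Proof. rewrite /pz negbK => /eqP; lia. Qed.

Definition b4 := (bool * bool * bool * bool)%type.
Definition Ppar (c : zz) : b4 := (pz (c0 c), pz (c1 c), pz (c2 c), pz (c3 c)).
Definition bmz (b : b4) : b4 := let: (b0, b1, b2, b3) := b in (b3, b0, b1 (+) b3, b2).
Definition bxor (a b : b4) : b4 :=
  let: (a0, a1, a2, a3) := a in let: (b0, b1, b2, b3) := b in
  (a0 (+) b0, a1 (+) b1, a2 (+) b2, a3 (+) b3).
Definition bunit (b : b4) : bool := let: (b0, b1, b2, b3) := b in (b0 (+) b2 (+) b3) || (b1 (+) b2).
Definition bA (b : b4) : bool := let: (b0, b1, b2, b3) := b in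
  b0 (+) b1 (+) b2 (+) b3 (+) (b0 && b2) (+) (b1 && b3).
Definition bB (b : b4) : bool := let: (b0, b1, b2, b3) := b in
  (b0 && b1) (+) (b1 && b2) (+) (b2 && b3).
Definition bzero : b4 := (false, false, false, false).
Definition zunit (c : zz) : bool := bunit (Ppar c).

Lemma Ppar_zmz c : Ppar (zmz c) = bmz (Ppar c).
Proof. by rewrite /Ppar /= pzN pzD. Qed.
Lemma Ppar_iter n c : Ppar (iter n zmz c) = iter n bmz (Ppar c).
Proof. by elim: n => //= n IH; rewrite Ppar_zmz IH. Qed.
Lemma Ppar_add a b : Ppar (zadd a b) = bxor (Ppar a) (Ppar b).
Proof. by rewrite /Ppar /= !pzD. Qed.
Lemma Ppar_sub a b : Ppar (zsub a b) = bxor (Ppar a) (Ppar b).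
Proof. by rewrite /Ppar /= !pzB. Qed.
Lemma pz_zA c : pz (zA c) = bA (Ppar c).
Proof. by rewrite /zA /bA /Ppar !pzD !pzM !andbb. Qed.
Lemma pz_zB c : pz (zB c) = bB (Ppar c).
Proof. by rewrite /zB /bB /Ppar !pzD !pzM. Qed.

Lemma F1 b : bunit b -> bA b (+) bB b.
Proof. by case: b => [[[[] []] []] []]. Qed.
Lemma F2 b : ~~ bunit b -> ~~ bA b && ~~ bB b.
Proof. by case: b => [[[[] []] []] []]. Qed.
Lemma F3 b : ~~ bunit (bxor b (iter 3 bmz b)).
Proof. by case: b => [[[[] []] []] []]. Qed.
Lemma F4 b : ~~ bunit b -> bxor b (iter 3 bmz b) = bzero.
Proof. by case: b => [[[[] []] []] []]. Qed.
Lemma F5 bx bb : bunit bx -> bunit bb -> bA bx = bA bb ->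
  exists2 a, (a < 6)%N & bxor bx (iter a bmz bb) = bzero.
Proof.
case: bx => [[[[] []] []] []]; case: bb => [[[[] []] []] []] //= _ _ _;
  first [ by exists 0%N | by exists 1%N | by exists 2%N | by exists 3%N | by exists 4%N | by exists 5%N ].
Qed.

Lemma zhalfE c : Ppar c = bzero -> ev c = 2%:R * ev (zhalf c).
Proof.
case: c => a b c d; rewrite /Ppar /= => [[]] /negbT ha /negbT hb /negbT hc /negbT hd.
rewrite /ev /= {1}(pz_half _ ha) {1}(pz_half _ hb) {1}(pz_half _ hc) {1}(pz_half _ hd).
rewrite !rmorphM /=. ring.
Qed.

Lemma zdel_nonunit w : zunit (zdel w) = false.
Proof. by rewrite /zunit /zdel Ppar_add Ppar_iter; apply/negbTE/F3. Qed.

Definition reach m (u : 'cV[algC]_m) (j : 'I_m) := exists s : seq 'M[algC]_m,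
    (forall G, G \in s -> allowed_gate G) /\ gate_prod s *m u = basis_vec j.

Arguments reach {m}.

Lemma gate_prod_cat m (s1 s2 : seq 'M[algC]_m) :
  gate_prod (s1 ++ s2) = gate_prod s1 *m gate_prod s2.
Proof. elim: s1 => [|A s1 IH] /=; first by rewrite mul1mx. by rewrite IH mulmxA. Qed.

Lemma reach_step m (G : 'M_m) u j : allowed_gate G -> reach (G *m u) j -> reach u j.
Proof.
move=> hG [s [hs e]]; exists (s ++ [:: G]); split.
  by move=> H; rewrite mem_cat => /orP [/hs //|]; rewrite inE => /eqP ->.
by rewrite gate_prod_cat /= mulmx1 -mulmxA.
Qed.

Lemma reach_base m (j : 'I_m) : reach (basis_vec j) j.
Proof. by exists [::]; split => //=; rewrite mul1mx. Qed.

Lemma onelevel_mul m (q : 'I_m) c (u : 'cV_m) :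
  onelevel q c *m u = \col_i (if i == q then c * u i 0 else u i 0).
Proof.
apply/matrixP => i k; rewrite (ord1 k) !mxE (bigD1 i) //= big1 ?addr0.
  rewrite !mxE eqxx andbb; case: (i == q) => //; by rewrite mul1r.
move=> r hr; rewrite !mxE (eq_sym i r) (negbTE hr) /=.
case: (eqVneq i q) => [<-|] /=; last by rewrite mul0r.
by rewrite (negbTE hr) mul0r.
Qed.

Lemma twolevel_mul m (p q : 'I_m) M (u : 'cV_m) : p != q ->
  twolevel p q M *m u = \col_i (if i == p then M i0 i0 * u p 0 + M i0 i1 * u q 0
                                else if i == q then M i1 i0 * u p 0 + M i1 i1 * u q 0
                                else u i 0).
Proof.
move=> hpq; have hqp : q != p by rewrite eq_sym.
apply/matrixP => i k; rewrite (ord1 k) !mxE.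
case: (eqVneq i p) => [->|hip].
  rewrite (bigD1 p) //= (bigD1 q) /=; last by rewrite hqp.
  rewrite big1 ?addr0; last first.
    move=> r /andP [hrp hrq]; rewrite !mxE eqxx /= (negbTE hrp) (negbTE hrq) (negbTE hpq).
    by rewrite eq_sym (negbTE hrp) mul0r.
  by rewrite !mxE !eqxx /= (negbTE hqp).
case: (eqVneq i q) => [->|hiq].
  rewrite (bigD1 p) //= (bigD1 q) /=; last by rewrite hqp.
  rewrite big1 ?addr0; last first.
    move=> r /andP [hrp hrq]; rewrite !mxE eqxx /= (negbTE hrp) (negbTE hrq) (negbTE hqp).
    by rewrite eq_sym (negbTE hrq) mul0r.
  by rewrite !mxE !eqxx /= (negbTE hqp) (negbTE hpq).
rewrite (bigD1 i) //= big1 ?addr0.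
  by rewrite !mxE (negbTE hip) (negbTE hiq) /= eqxx mul1r.
move=> r hr; rewrite !mxE (negbTE hip) (negbTE hiq) /= eq_sym (negbTE hr) mul0r.
by [].
Qed.

Definition phase m (q : 'I_m) (a : nat) (u : 'cV[algC]_m) : 'cV[algC]_m :=
  \col_i (if i == q then zeta12 ^+ a * u i 0 else u i 0).

Arguments phase {m}.

Lemma reach_phase m (q : 'I_m) a u j : reach (phase q a u) j -> reach u j.
Proof.
elim: a u => [|a IH] u.
  have -> : phase q 0 u = u; last by [].
  by apply/matrixP => i k; rewrite (ord1 k) !mxE; case: (i == q); rewrite ?mul1r.
move=> h; apply: (@reach_step _ (onelevel q zeta12)); first by left; exists q.
apply: IH; rewrite onelevel_mul.
suff -> : phase q a (\col_i (if i == q then zeta12 * u i 0 else u i 0)) = phase q a.+1 u by [].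
apply/matrixP => i k; rewrite (ord1 k) !mxE; case: (eqVneq i q) => [->|] //.
by rewrite mulrA -exprSr.
Qed.

Definition swapv m (p q : 'I_m) (u : 'cV[algC]_m) : 'cV[algC]_m :=
  \col_i (if i == p then u q 0 else if i == q then u p 0 else u i 0).

Arguments swapv {m}.

Lemma reach_swap m (p q : 'I_m) u j : (p < q)%N -> reach (swapv p q u) j -> reach u j.
Proof.
move=> hpq h; apply: (@reach_step _ (twolevel p q Xmx)).
  by right; exists p, q; split => //; left.
have hne : p != q by rewrite neq_ltn hpq.
rewrite twolevel_mul //.
suff -> : (\col_i (if i == p then Xmx i0 i0 * u p 0 + Xmx i0 i1 * u q 0
         else if i == q then Xmx i1 i0 * u p 0 + Xmx i1 i1 * u q 0 else u i 0)) = swapv p q u by [].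
apply/matrixP => i k; rewrite (ord1 k) !mxE /=.
case: (i == p); first by rewrite mul0r mul1r add0r.
case: (i == q) => //; by rewrite mul0r mul1r addr0.
Qed.

Definition hh : algC := (1 + 'i) / 2%:R.

Definition hstep m (p q : 'I_m) (u : 'cV[algC]_m) : 'cV[algC]_m :=
  \col_i (if i == p then hh * (u p 0 + u q 0)
          else if i == q then hh * (u p 0 - u q 0) else u i 0).

Arguments hstep {m}.

Lemma reach_hstep m (p q : 'I_m) u j : (p < q)%N -> reach (hstep p q u) j -> reach u j.
Proof.
move=> hpq h; apply: (@reach_step _ (twolevel p q H'mx)).
  by right; exists p, q; split => //; right.
have hne : p != q by rewrite neq_ltn hpq.
rewrite twolevel_mul //.
suff -> : (\col_i (if i == p then H'mx i0 i0 * u p 0 + H'mx i0 i1 * u q 0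
         else if i == q then H'mx i1 i0 * u p 0 + H'mx i1 i1 * u q 0 else u i 0)) = hstep p q u by [].
apply/matrixP => i k; rewrite (ord1 k) !mxE /=.
case: (i == p); first by rewrite /hh; ring.
case: (i == q) => //; by rewrite /hh; ring.
Qed.

Lemma nat_sq3 n : forall p q : nat, (q <= n)%N -> (p * p = 3 * (q * q))%N -> q = 0%N.
Proof.
elim: n => [|n IH] p q hq e; first by lia.
case: (posnP q) => [//|q0].
have h3p : (3 %| p)%N.
  have : (3 %| p * p)%N by rewrite e dvdn_mulr.
  by rewrite Euclid_dvdM // orbb.
case/dvdnP: h3p => p' ep; subst p.
have e2 : (q * q = 3 * (p' * p'))%N by lia.
have h3q : (3 %| q)%N.
  have : (3 %| q * q)%N by rewrite e2 dvdn_mulr.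
  by rewrite Euclid_dvdM // orbb.
case/dvdnP: h3q => q' eq'; subst q.
have e3 : (p' * p' = 3 * (q' * q'))%N by lia.
have := IH p' q' ltac:(lia) e3; lia.
Qed.

Lemma int_sq3 (x y : int) : x * x = 3 * (y * y) -> y = 0.
Proof.
move=> e; have e' := congr1 absz e; rewrite !abszM /= in e'.
have := @nat_sq3 `|y|%N `|x|%N `|y|%N (leqnn _) ltac:(lia).
by move/eqP; rewrite absz_eq0 => /eqP.
Qed.

Lemma irr3 (a b n : int) : a%:~R + s3 * b%:~R = n%:~R :> algC -> b = 0 /\ a = n.
Proof.
move=> e.
have eb : b = 0.
  apply: (@int_sq3 (n - a)); apply: (@intr_inj algC).
  have e1 : s3 * b%:~R = (n - a)%:~R by rewrite rmorphB /= -e; ring.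
  have : (s3 * b%:~R) ^+ 2 = ((n - a)%:~R) ^+ 2 by rewrite e1.
  rewrite exprMn hs => e2. rewrite !rmorphM /= -expr2 -e2. by rewrite expr2.
split => //; move: e; rewrite eb mulr0 addr0; exact: intr_inj.
Qed.

Lemma sum_norm m (v : 'I_m -> zz) :
  \sum_i `|ev (v i)| ^+ 2 = (\sum_i zA (v i))%:~R + s3 * (\sum_i zB (v i))%:~R.
Proof.
rewrite (eq_bigr _ (fun i _ => ev_norm (v i))) big_split /= -mulr_sumr.
by rewrite !rmorph_sum.
Qed.

Lemma pz_sum m (x : 'I_m -> int) : pz (\sum_i x i) = odd #|[set i | pz (x i)]|.
Proof.
have -> : #|[set i | pz (x i)]| = (\sum_i (pz (x i) : nat))%N.
  rewrite -sum1_card big_mkcond /=; apply: eq_bigr => i _; rewrite inE; by case: pz.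
elim/big_ind2: _ => //.
  by move=> a n b n' ha hb; rewrite pzD oddD ha hb.
by move=> i _; case: pz.
Qed.

Definition dd : algC := 1 + 'i.
Lemma dd_norm : `|dd| ^+ 2 = 2%:R.
Proof. rewrite normCK /dd rmorphD /= conjCi rmorph1. have h2 := hi. by ring: h2. Qed.
Lemma dd_neq0 : dd != 0.
Proof.
apply/eqP => e; have := dd_norm; rewrite e normr0 expr0n /= => /eqP.
by rewrite eq_sym pnatr_eq0.
Qed.
Lemma dd_conj : dd * (1 - 'i) = 2%:R.
Proof. rewrite /dd. have h2 := hi. by ring: h2. Qed.

Lemma zA_ge0 c : 0 <= zA c.
Proof.
case: c => a b c d; rewrite /zA /=.
have q1 := sqr_ge0 (2 * a + c); rewrite expr2 in q1.
have q2 := sqr_ge0 (2 * b + d); rewrite expr2 in q2.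
have q3 := sqr_ge0 c; rewrite expr2 in q3.
have q4 := sqr_ge0 d; rewrite expr2 in q4.
nia.
Qed.
Lemma zA_eq0 c : zA c = 0 -> c = zzero.
Proof.
case: c => a b c d; rewrite /zA /= => h.
have q1 := sqr_ge0 (2 * a + c); rewrite expr2 in q1.
have q2 := sqr_ge0 (2 * b + d); rewrite expr2 in q2.
have q3 := sqr_ge0 c; rewrite expr2 in q3.
have q4 := sqr_ge0 d; rewrite expr2 in q4.
have hc : c * c = 0 by nia.
have hd : d * d = 0 by nia.
have hc' : c = 0 by nia.
have hd' : d = 0 by nia.
subst c d.
have ha : a = 0 by nia. have hb : b = 0 by nia. by subst.
Qed.

Definition zeqb (a b : zz) : bool := [&& c0 a == c0 b, c1 a == c1 b, c2 a == c2 b & c3 a == c3 b].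
Lemma zeqbP a b : zeqb a b -> a = b.
Proof. by case: a => ? ? ? ?; case: b => ? ? ? ?; rewrite /zeqb /= => /and4P [/eqP -> /eqP -> /eqP -> /eqP ->]. Qed.

Lemma zA_eq1 c : zA c = 1 -> exists n, iter n zmz c = zone.
Proof.
move=> h.
suff : has (fun n => zeqb (iter n zmz c) zone) (iota 0 12).
  by case/hasP => n _ /zeqbP e; exists n.
move: h; case: c => a b c d; rewrite /zA /= => h.
have q1 := sqr_ge0 (2 * a + c); rewrite expr2 in q1.
have q2 := sqr_ge0 (2 * b + d); rewrite expr2 in q2.
have q3 := sqr_ge0 (2 * c + a); rewrite expr2 in q3.
have q4 := sqr_ge0 (2 * d + b); rewrite expr2 in q4.
have q5 := sqr_ge0 a; rewrite expr2 in q5.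
have q6 := sqr_ge0 b; rewrite expr2 in q6.
have q7 := sqr_ge0 c; rewrite expr2 in q7.
have q8 := sqr_ge0 d; rewrite expr2 in q8.
have ra : a * a <= 1 by nia.
have rb : b * b <= 1 by nia.
have rc : c * c <= 1 by nia.
have rd : d * d <= 1 by nia.
have ha : a = -1 \/ a = 0 \/ a = 1 by nia.
have hb : b = -1 \/ b = 0 \/ b = 1 by nia.
have hc : c = -1 \/ c = 0 \/ c = 1 by nia.
have hd : d = -1 \/ d = 0 \/ d = 1 by nia.
move: h.
by case: ha => [->|[->|->]]; case: hb => [->|[->|->]]; case: hc => [->|[->|->]];
  case: hd => [->|[->|->]]; vm_compute; try discriminate.
Qed.

Definition uvec m (k : nat) (v : 'I_m -> zz) : 'cV[algC]_m := \col_i (ev (v i) / dd ^+ k).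
Arguments uvec {m}.
Definition units m (v : 'I_m -> zz) : {set 'I_m} := [set i | zunit (v i)].
Arguments units {m}.

Lemma div_one c : zunit c = false ->
  ev c = dd * ev (zhalf (zsub c (iter 3 zmz c))).
Proof.
move=> hc.
have e : ev (zsub c (iter 3 zmz c)) = 2%:R * ev (zhalf (zsub c (iter 3 zmz c))).
  by apply: zhalfE; rewrite Ppar_sub Ppar_iter F4 //; move: hc; rewrite /zunit => ->.
move: e; rewrite ev_sub ev_iter z3 /dd.
move: (ev (zhalf _)) (ev c) => W X e. have h2 := hi.
have -> : W = (X - 'i * X) / 2%:R by rewrite e; field.
by field: h2.
Qed.

Lemma div_step m k (v : 'I_m -> zz) : (forall i, zunit (v i) = false) ->
  let w := fun i => zhalf (zsub (v i) (iter 3 zmz (v i))) in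
  uvec k.+1 v = uvec k w /\ \sum_i `|ev (v i)| ^+ 2 = 2%:R * \sum_i `|ev (w i)| ^+ 2.
Proof.
move=> hv w; split.
  apply/matrixP => i kk; rewrite !mxE (@div_one _ (hv i)) -/(w i) exprSr.
  have := dd_neq0 => hd. field. by rewrite hd expf_neq0.
rewrite mulr_sumr; apply: eq_bigr => i _.
by rewrite (@div_one _ (hv i)) -/(w i) normrM exprMn dd_norm.
Qed.

Lemma paral (X Y : algC) :
  `|dd * ((X + Y) / 2%:R)| ^+ 2 + `|dd * ((X - Y) / 2%:R)| ^+ 2 = `|X| ^+ 2 + `|Y| ^+ 2.
Proof.
rewrite !normrM !exprMn dd_norm !normCK !rmorphD !rmorphN !fmorphV !rmorph_nat /=.
by field.
Qed.

Lemma zeta_pow_norm a (Z : algC) : `|zeta12 ^+ a * Z| ^+ 2 = `|Z| ^+ 2.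
Proof.
rewrite normrM exprMn normrX -exprM mulnC exprM normCK.
rewrite (_ : zeta12 * zeta12^* = 1) ?expr1n ?mul1r //.
rewrite zconj zetaE. have h1 := hs. have h2 := hi. by field: h1 h2.
Qed.

Lemma pair_step m k (v : 'I_m -> zz) (p q : 'I_m) : (p < q)%N ->
  zunit (v p) -> zunit (v q) -> bA (Ppar (v p)) = bA (Ppar (v q)) ->
  exists v' : 'I_m -> zz,
    [/\ forall j, reach (uvec k v') j -> reach (uvec k v) j,
        \sum_i `|ev (v' i)| ^+ 2 = \sum_i `|ev (v i)| ^+ 2 &
        (#|units v'| < #|units v|)%N].
Proof.
move=> hpq up uq eA.
have hne : p != q by rewrite neq_ltn hpq.
have hqp : q != p by rewrite eq_sym.
have [a _ ha] := @F5 _ _ up uq eA.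
set y := iter a zmz (v q).
set w := zhalf (zadd (v p) y).
set w' := zsub w y.
have ey : ev y = zeta12 ^+ a * ev (v q) by rewrite ev_iter.
have ew : ev (zadd (v p) y) = 2%:R * ev w.
  by apply: zhalfE; rewrite Ppar_add Ppar_iter.
rewrite ev_add in ew.
have ew' : ev w' = ev w - ev y by rewrite ev_sub.
exists (fun i : 'I_m => if i == p then zdel w else if i == q then zdel w' else v i); split.
- move=> j h; apply: (@reach_phase _ q a); apply: (@reach_hstep _ p q) => //.
  suff <- : uvec k (fun i : 'I_m => if i == p then zdel w else if i == q then zdel w' else v i) =
     hstep p q (phase q a (uvec k v)) by [].
  apply/matrixP => i kk; rewrite !mxE.
  have [eip|hip] := eqVneq i p.
    subst i; rewrite !eqxx (negbTE hne) ev_del /hh /dd.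
    have h2 : ev w = (ev (v p) + zeta12 ^+ a * ev (v q)) / 2%:R by rewrite -ey ew; field.
    rewrite h2; field; by rewrite expf_neq0 // dd_neq0.
  have [eiq|hiq] := eqVneq i q; last by [].
  subst i; rewrite !eqxx (negbTE hne) ev_del ew' /hh /dd.
  have h2 : ev w = (ev (v p) + zeta12 ^+ a * ev (v q)) / 2%:R by rewrite -ey ew; field.
  rewrite h2 ey; field; by rewrite expf_neq0 // dd_neq0.
- rewrite (bigD1 p) //= (bigD1 q) /=; last by rewrite hqp.
  rewrite [RHS](bigD1 p) //= [in RHS](bigD1 q) /=; last by rewrite hqp.
  rewrite eqxx (negbTE hqp) eqxx !addrA.
  congr (_ + _); last by apply: eq_bigr => i /andP [/negbTE -> /negbTE ->].
  have h2 : ev w = (ev (v p) + ev y) / 2%:R by rewrite ew; field.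
  rewrite !ev_del ew' h2 (_ : (ev (v p) + ev y) / 2%:R - ev y = (ev (v p) - ev y) / 2%:R);
    last by field.
  by rewrite paral ey zeta_pow_norm.
- have pin : p \in units v by rewrite inE.
  have qin : q \in units v :\ p by rewrite !inE hqp.
  rewrite (cardsD1 p (units v)) pin (cardsD1 q (units v :\ p)) qin add1n add1n ltnS.
  apply: leq_trans (leqnSn _); apply: subset_leq_card; apply/subsetP => i.
  rewrite !inE; case: (eqVneq i p) => [_|hip]; first by rewrite zdel_nonunit.
  case: (eqVneq i q) => [_|hiq]; first by rewrite zdel_nonunit.
  by [].
Qed.

Lemma swap_basis m (p q : 'I_m) : p != q ->
  swapv p q (basis_vec p) = basis_vec q /\ swapv p q (basis_vec q) = basis_vec p.
Proof.
move=> hpq; have hqp : q != p by rewrite eq_sym.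
split; apply/matrixP => i kk; rewrite !mxE.
  have [eip|hip] := eqVneq i p; first by subst i; rewrite ?eqxx ?(negbTE hpq) ?(negbTE hqp) ?(eq_sym q p) ?(negbTE hpq).
  have [eiq|hiq] := eqVneq i q; first by subst i; rewrite ?eqxx ?(negbTE hpq) ?(negbTE hqp) ?(eq_sym q p) ?(negbTE hpq).
  by [].
have [eip|hip] := eqVneq i p; first by subst i; rewrite ?eqxx ?(negbTE hpq) ?(negbTE hqp) ?(eq_sym q p) ?(negbTE hpq).
have [eiq|hiq] := eqVneq i q; first by subst i; rewrite ?eqxx ?(negbTE hpq) ?(negbTE hqp) ?(eq_sym q p) ?(negbTE hpq).
by [].
Qed.

Lemma base m (v : 'I_m -> zz) : \sum_i `|ev (v i)| ^+ 2 = 1 -> forall j, reach (uvec 0 v) j.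
Proof.
move=> hn j.
have [_ hA] : (\sum_i zB (v i)) = 0 /\ (\sum_i zA (v i)) = 1.
  by apply: irr3; rewrite -sum_norm hn.
case: (pickP (fun i => zA (v i) != 0)) => [i0 hi0 | hnone]; last first.
  by move: hA; rewrite big1 // => i _; have := hnone i => /= /negbFE /eqP.
move: hA; rewrite (bigD1 i0) //= => hA.
have g0 := zA_ge0 (v i0).
have g1 : 0 <= 1 - zA (v i0).
  rewrite -hA [zA (v i0) + _]addrC addrK; apply: sumr_ge0 => i _; exact: zA_ge0.
have e0 : zA (v i0) = 1 by move: hi0 => /eqP; lia.
have e1 : \sum_(i < m | i != i0) zA (v i) = 0 
  by apply: (@addrI _ (zA (v i0))); rewrite addr0 hA e0.
have hz : forall i, i != i0 -> ev (v i) = 0.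
  move=> i hi; have := (psumr_eq0P (fun i _ => zA_ge0 (v i)) e1) i hi.
  by move/zA_eq0 => ->; rewrite ev_zero.
have [n hn'] := @zA_eq1 _ e0.
apply: (@reach_phase _ i0 n).
have -> : phase i0 n (uvec 0 v) = basis_vec i0.
  apply/matrixP => i kk; rewrite !mxE expr0 divr1.
  have [ei|hi] := eqVneq i i0; first by subst i; rewrite -ev_iter hn' ev_one.
  by rewrite hz.
have [ej|hj] := eqVneq j i0; first by subst j; exact: reach_base.
have hj' : i0 != j by rewrite eq_sym.
case: (ltngtP i0 j) => h.
- apply: (@reach_swap _ i0 j) => //. by rewrite (@swap_basis _ _ _ hj').1; exact: reach_base.
- apply: (@reach_swap _ j i0) => //. by rewrite (@swap_basis _ _ _ hj).2; exact: reach_base.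
- by move: hj; rewrite (val_inj h) eqxx.
Qed.

Lemma other m (T : {set 'I_m}) p : p \in T -> ~~ odd #|T| -> exists q, q \in T /\ q != p.
Proof.
move=> pT; rewrite (cardsD1 p T) pT /= negbK => h.
have : (0 < #|T :\ p|)%N by case: #|T :\ p| h.
rewrite card_gt0 => /set0Pn [q]; rewrite in_setD1 => /andP [hq qT].
by exists q.
Qed.

Lemma find_pair m k (v : 'I_m -> zz) :
  \sum_i `|ev (v i)| ^+ 2 = 2%:R ^+ k.+1 -> (0 < #|units v|)%N ->
  exists p q : 'I_m, [/\ (p < q)%N, zunit (v p), zunit (v q) & bA (Ppar (v p)) = bA (Ppar (v q))].
Proof.
move=> hn hpos.
have [hB hA] : (\sum_i zB (v i)) = 0 /\ (\sum_i zA (v i)) = 2 ^+ k.+1.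
  by apply: irr3; rewrite -sum_norm hn rmorphXn.
have oA : ~~ odd #|[set i | pz (zA (v i))]| by rewrite -pz_sum hA exprS pzM.
have oB : ~~ odd #|[set i | pz (zB (v i))]| by rewrite -pz_sum hB.
move: hpos; rewrite card_gt0 => /set0Pn [p]; rewrite inE => up.
have F1p := @F1 _ up.
suff [q [uq hqp eq]] : exists q, [/\ zunit (v q), q != p & bA (Ppar (v p)) = bA (Ppar (v q))].
  case: (ltngtP p q) => h.
  - by exists p, q.
  - by exists q, p.
  - by move: hqp; rewrite (val_inj h) eqxx.
case hAp : (bA (Ppar (v p))).
  have pT : p \in [set i | pz (zA (v i))] by rewrite inE pz_zA.
  have [q [qT hqp]] := @other _ _ _ pT oA.
  move: qT; rewrite inE pz_zA => hAq.
  exists q; split => //.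
  apply/negPn/negP => nq; have := @F2 _ nq; by rewrite hAq.
have hBp : bB (Ppar (v p)) by move: F1p; rewrite hAp.
have pT : p \in [set i | pz (zB (v i))] by rewrite inE pz_zB.
have [q [qT hqp]] := @other _ _ _ pT oB.
move: qT; rewrite inE pz_zB => hBq.
have uq : zunit (v q) by apply/negPn/negP => nq; have := @F2 _ nq; rewrite hBq andbF.
exists q; split => //.
by have := @F1 _ uq; rewrite hBq; case: bA.
Qed.

Lemma nounits m (v : 'I_m -> zz) : #|units v| = 0%N -> forall i, zunit (v i) = false.
Proof.
move=> h0 i; apply/negbTE; move: h0 => /eqP; rewrite cards_eq0 => /eqP e.
apply/negP => ui; have : i \in units v by rewrite inE.
by rewrite e inE.
Qed.

Lemma div_case m k (v : 'I_m -> zz) :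
  (forall w : 'I_m -> zz, \sum_i `|ev (w i)| ^+ 2 = 2%:R ^+ k -> forall j, reach (uvec k w) j) ->
  #|units v| = 0%N -> \sum_i `|ev (v i)| ^+ 2 = 2%:R ^+ k.+1 -> forall j, reach (uvec k.+1 v) j.
Proof.
move=> IHk h0 hv j.
have [e1 e2] := @div_step _ k _ (@nounits _ _ h0); rewrite e1; apply: IHk.
have h2 : (2%:R : algC) != 0 by rewrite pnatr_eq0.
by apply: (mulfI h2); rewrite -e2 hv exprS.
Qed.

Lemma mainlem m k : forall v : 'I_m -> zz,
  \sum_i `|ev (v i)| ^+ 2 = 2%:R ^+ k -> forall j, reach (uvec k v) j.
Proof.
elim: k => [|k IHk] v hv j; first by apply: base; rewrite hv expr0.
suff H : forall n (v : 'I_m -> zz), (#|units v| <= n)%N ->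
    \sum_i `|ev (v i)| ^+ 2 = 2%:R ^+ k.+1 -> reach (uvec k.+1 v) j.
  exact: H _ _ (leqnn _) hv.
elim=> [|n IHn] {}v hc {}hv; case: (posnP #|units v|) => [h0|hpos].
- exact: (@div_case _ _ _ IHk h0 hv j).
- by move: hc; rewrite leqn0 => /eqP h; rewrite h in hpos.
- exact: (@div_case _ _ _ IHk h0 hv j).
- have [p [q [hpq up uq eA]]] := @find_pair _ _ _ hv hpos.
  have [v' [hr hn hlt]] := @pair_step _ k.+1 _ _ _ hpq up uq eA.
  apply: hr; apply: IHn; last by rewrite hn.
  by rewrite -ltnS; apply: leq_trans hlt hc.
Qed.

Lemma two_pow_neq0 K : (2%:R : algC) ^+ K != 0.
Proof. by rewrite expf_neq0 // pnatr_eq0. Qed.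

Lemma intr2X K : ((2 : int) ^+ K)%:~R = (2%:R : algC) ^+ K.
Proof. by rewrite rmorphXn. Qed.

Lemma R12_rep x : inR12 x -> exists K (c : zz), x = ev c / 2%:R ^+ K.
Proof.
elim=> {x}.
- by exists 0%N, zone; rewrite ev_one expr0 divr1.
- by exists 1%N, zone; rewrite ev_one expr1 div1r.
- exists 0%N, (ZZ 0 1 0 0); rewrite expr0 divr1 /ev /=; ring.
- move=> x y _ [K [a ->]] _ [L [b ->]].
  exists (K + L)%N, (zadd (zscal (2 ^+ L) a) (zscal (2 ^+ K) b)).
  rewrite ev_add !ev_scal !intr2X exprD.
  have := two_pow_neq0 K; have := two_pow_neq0 L => hL hK. field; by rewrite ?two_pow_neq0.
- move=> x _ [K [a ->]]; exists K, (zscal (-1) a); rewrite ev_scal.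
  have := two_pow_neq0 K => hK. rewrite rmorphN rmorph1 /=. field; by rewrite ?two_pow_neq0.
- move=> x y _ [K [a ->]] _ [L [b ->]].
  exists (K + L)%N, (zmul a b); rewrite ev_mul exprD.
  have := two_pow_neq0 K; have := two_pow_neq0 L => hL hK. field; by rewrite ?two_pow_neq0.
Qed.

Lemma rep_lift K K' c : (K <= K')%N ->
  ev c / 2%:R ^+ K = ev (zscal (2 ^+ (K' - K)) c) / 2%:R ^+ K'.
Proof.
move=> h; rewrite ev_scal intr2X -{2}(subnK h) exprD.
have := two_pow_neq0 K; have := two_pow_neq0 (K' - K) => h1 h2. field; by rewrite ?two_pow_neq0.
Qed.

Lemma fchoice (I : finType) (T : Type) (P : I -> T -> Prop) :
  (forall i, exists t, P i t) -> exists f : I -> T, forall i, P i (f i).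
Proof.
move=> H; exists (fun i => proj1_sig (constructive_indefinite_description _ (H i))).
move=> i; exact: proj2_sig (constructive_indefinite_description _ (H i)).
Qed.

Lemma dd2 : dd ^+ 2 = 2%:R * 'i.
Proof. rewrite /dd. have h2 := hi. by ring: h2. Qed.

Theorem lemma7p5 (m : nat) (u : 'cV[algC]_m)
  (hunit : \sum_(i < m) `|u i 0| ^+ 2 = 1)
  (hR12 : forall i : 'I_m, inR12 (u i 0)) :
  forall j : 'I_m, exists s : seq 'M[algC]_m,
    (forall G : 'M[algC]_m, G \in s -> allowed_gate G) /\ (gate_prod s *m u = basis_vec j).
Proof.
move=> j.
have [f hf] := @fchoice _ _ (fun i (t : nat * zz) => u i 0 = ev t.2 / 2%:R ^+ t.1)
  (fun i => let: ex_intro K (ex_intro c e) := @R12_rep _ (hR12 i) in ex_intro _ (K, c) e).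
set K := (\sum_i (f i).1)%N.
set v0 := fun i => zscal (2 ^+ (K - (f i).1)) (f i).2.
have hv0 : forall i, u i 0 = ev (v0 i) / 2%:R ^+ K.
  move=> i; rewrite hf; apply: rep_lift.
  by rewrite /K (bigD1 i) //= leq_addr.
set v := fun i => iter (3 * K) zmz (v0 i).
have hd : dd ^+ (2 * K) != 0 by rewrite expf_neq0 // dd_neq0.
have hii : 'i ^+ K != 0 :> algC.
  by rewrite expf_neq0 //; apply/eqP => e; have := hi; rewrite e expr0n /= => /eqP; rewrite eq_sym oppr_eq0 oner_eq0.
have hu : u = uvec (2 * K) v.
  apply/matrixP => i kk; rewrite (ord1 kk) !mxE hv0 /v ev_iter exprM z3 exprM dd2 exprMn.
  have := two_pow_neq0 K => h2. field; by rewrite hii h2.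
have hn : \sum_i `|ev (v i)| ^+ 2 = 2%:R ^+ (2 * K).
  have e : forall i, ev (v i) = u i 0 * dd ^+ (2 * K).
    by move=> i; rewrite hu mxE divfK.
  rewrite (eq_bigr _ (fun i _ => congr1 (fun x => `|x| ^+ 2) (e i))).
  under eq_bigr do rewrite normrM exprMn.
  by rewrite -mulr_suml hunit mul1r normrX -exprM mulnC exprM dd_norm.
have [s [hs e]] := @mainlem _ _ _ hn j.
by exists s; split => //; rewrite hu.
Qed.
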